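(* Let $N\ge 1$ be an integer and $h,g>0$ real numbers. For $k\in\{0,1,\dots,N\}$ and $\Delta>0$ define $$R_k(\Delta):=\log\Big(1+(N-k)\frac{h^2}{1+\Delta}\Big)+\log(1+kg^2)-k\log\Big(\frac{1+\Delta}{\Delta}\Big)$$ (logarithms base $2$), and let $\Delta^*_{0N}$ be the positive root of $R_0(\Delta)=R_N(\Delta)$. Then $\Delta^*_{0N}$ attains $\max_{\Delta>0}\min_{k\in\{0,\dots,N\}}R_k(\Delta)$, and this optimal value equals $R_0(\Delta^*_{0N})$.
   Context: This is the optimal common quantization distortion for quantize-map-and-forward in the symmetric $N$-relay diamond network (all source-relay channel magnitudes equal $h$, all relay-destination magnitudes equal $g$); $R_k(\Delta)$ is the rate of a cut containing $k$ relays when every relay uses Gaussian quantization distortion $\Delta$, and the equation $R_0(\Delta)=R_N(\Delta)$ has exactly one positive root. *)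

(* Defs.v *)
From Stdlib Require Import Reals List.
Open Scope R_scope.

Definition log2 (x : R) : R := ln x / ln 2.

(* Rate of a cut containing k relays, all relays using distortion D. *)
Definition Rcut (N : nat) (h g : R) (k : nat) (D : R) : R :=
  log2 (1 + INR (N - k) * (h ^ 2 / (1 + D)))
  + log2 (1 + INR k * g ^ 2)
  - INR k * log2 ((1 + D) / D).

Definition minRcut (N : nat) (h g : R) (D : R) : R :=
  fold_left Rmin (map (fun k => Rcut N h g k D) (seq 1 N)) (Rcut N h g 0 D).

(* Main.v *)
Require Import Defs.
From Stdlib Require Import Reals List Lra Lia.
Open Scope R_scope.

Lemma ln_le_m1 x : 0 < x -> ln x <= x - 1.
Proof. intros Hx. pose proof (exp_ineq1_le (ln x)). rewrite exp_ln in H; lra. Qed.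

Lemma ln_conc u v t : 0 < u -> 0 < v -> 0 <= t <= 1 ->
  (1 - t) * ln u + t * ln v <= ln ((1 - t) * u + t * v).
Proof.
  intros Hu Hv Ht. set (m := (1 - t) * u + t * v).
  assert (Hm : 0 < m) by (unfold m; nra).
  pose proof (ln_le_m1 (u / m)) as A. pose proof (ln_le_m1 (v / m)) as B.
  assert (0 < u / m) by (apply Rdiv_lt_0_compat; auto).
  assert (0 < v / m) by (apply Rdiv_lt_0_compat; auto).
  specialize (A H). specialize (B H0).
  unfold Rdiv in A, B. rewrite ln_mult, ln_Rinv in A, B; auto; try now apply Rinv_0_lt_compat.
  assert (E : (1 - t) * (u * / m - 1) + t * (v * / m - 1) = 0).
  { unfold m in *. field. lra. }
  nra.
Qed.

Lemma Rdiv_le_0_compat a b : 0 <= a -> 0 < b -> 0 <= a / b.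
Proof. intros. unfold Rdiv. apply Rmult_le_pos; auto. left; now apply Rinv_0_lt_compat. Qed.

Lemma ln2_pos : 0 < ln 2.
Proof. pose proof ln_lt_2; lra. Qed.

Lemma log2_conc u v t : 0 < u -> 0 < v -> 0 <= t <= 1 ->
  (1 - t) * log2 u + t * log2 v <= log2 ((1 - t) * u + t * v).
Proof.
  intros. unfold log2. pose proof ln2_pos. pose proof (ln_conc u v t H H0 H1).
  apply Rmult_le_reg_r with (ln 2); auto.
  replace (((1 - t) * (ln u / ln 2) + t * (ln v / ln 2)) * ln 2) with
    ((1 - t) * ln u + t * ln v) by (field; lra).
  replace (ln ((1 - t) * u + t * v) / ln 2 * ln 2) with (ln ((1 - t) * u + t * v))
    by (field; lra). auto.
Qed.

Lemma log2_1 : log2 1 = 0.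
Proof. unfold log2; rewrite ln_1; unfold Rdiv; ring. Qed.

Lemma log2_le x y : 0 < x -> x <= y -> log2 x <= log2 y.
Proof.
  intros. unfold log2. pose proof ln2_pos. unfold Rdiv.
  apply Rmult_le_compat_r. left; now apply Rinv_0_lt_compat.
  destruct H0. left; now apply ln_increasing. subst; lra.
Qed.

Lemma Rk_ge N h g k D : (1 <= N)%nat -> (k <= N)%nat -> 0 < D ->
  let t := INR k / INR N in
  (1 - t) * Rcut N h g 0 D + t * Rcut N h g N D <= Rcut N h g k D.
Proof.
  intros HN Hk HD t. unfold Rcut.
  assert (HNp : 0 < INR N) by (apply lt_0_INR; lia).
  assert (Ht : 0 <= t <= 1).
  { unfold t. split. apply Rdiv_le_0_compat; auto; apply pos_INR.
    apply Rmult_le_reg_r with (INR N); auto. unfold Rdiv.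
    rewrite Rmult_assoc, Rinv_l by lra. rewrite Rmult_1_r, Rmult_1_l. now apply le_INR. }
  rewrite Nat.sub_0_r, Nat.sub_diag. simpl INR at 2 3 4 5.
  rewrite minus_INR by auto.
  set (a := h ^ 2 / (1 + D)). set (c := log2 ((1 + D) / D)).
  assert (Ha : 0 <= a) by (unfold a; apply Rdiv_le_0_compat; [nra|lra]).
  assert (Hb : 0 <= g ^ 2) by nra.
  rewrite !Rmult_0_l, !Rplus_0_r, log2_1.
  pose proof (log2_conc (1 + INR N * a) 1 t) as A.
  pose proof (log2_conc 1 (1 + INR N * g ^ 2) t) as B.
  rewrite log2_1 in A, B.
  replace ((1 - t) * (1 + INR N * a) + t * 1) with (1 + (INR N - INR k) * a) in A
    by (unfold t; field; lra).
  replace ((1 - t) * 1 + t * (1 + INR N * g ^ 2)) with (1 + INR k * g ^ 2) in B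
    by (unfold t; field; lra).
  assert (E : t * INR N = INR k) by (unfold t; field; lra).
  assert (0 < 1 + INR N * a) by nra. assert (0 < 1 + INR N * g ^ 2) by nra.
  specialize (A H Rlt_0_1 Ht). specialize (B Rlt_0_1 H0 Ht).
  assert (F : t * (0 + log2 (1 + INR N * g ^ 2) - INR N * c) = t * log2 (1 + INR N * g ^ 2) - INR k * c)
    by (rewrite <- E; ring).
  rewrite F. lra.
Qed.

Lemma fold_le_init l a : fold_left Rmin l a <= a.
Proof.
  revert a; induction l; intros; simpl. lra.
  eapply Rle_trans. apply IHl. apply Rmin_l.
Qed.

Lemma fold_le_mem l a x : In x l -> fold_left Rmin l a <= x.
Proof.
  revert a; induction l; intros; simpl in *. contradiction.
  destruct H. subst. eapply Rle_trans. apply fold_le_init. apply Rmin_r.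
  auto.
Qed.

Lemma fold_ge l a m : m <= a -> (forall x, In x l -> m <= x) -> m <= fold_left Rmin l a.
Proof.
  revert a; induction l; intros; simpl in *. auto.
  apply IHl. apply Rmin_glb; auto. auto.
Qed.

Theorem theorem2 (N : nat) (h g Dstar : R) :
  (1 <= N)%nat -> 0 < h -> 0 < g ->
  0 < Dstar -> Rcut N h g 0 Dstar = Rcut N h g N Dstar ->
  (forall D : R, 0 < D -> minRcut N h g D <= minRcut N h g Dstar) /\
  minRcut N h g Dstar = Rcut N h g 0 Dstar.
Proof.
  intros HN Hh Hg HD Heq.
  assert (Hmin : minRcut N h g Dstar = Rcut N h g 0 Dstar).
  { apply Rle_antisym. apply fold_le_init.
    apply fold_ge. lra.
    intros x Hx. apply in_map_iff in Hx. destruct Hx as [k [<- Hk]].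
    apply in_seq in Hk.
    pose proof (Rk_ge N h g k Dstar HN ltac:(lia) HD) as A. simpl in A.
    rewrite <- Heq in A. lra. }
  split; auto. rewrite Hmin. intros D HDp.
  assert (HNin : In (Rcut N h g N D) (map (fun k => Rcut N h g k D) (seq 1 N))).
  { apply (in_map (fun k => Rcut N h g k D)). apply in_seq. lia. }
  assert (HNp : 0 < INR N) by (apply lt_0_INR; lia).
  destruct (Rle_dec Dstar D).
  - eapply Rle_trans. apply fold_le_init. unfold Rcut.
    rewrite Nat.sub_0_r. simpl INR at 2 4. rewrite !Rmult_0_l, !Rminus_0_r.
    apply Rplus_le_compat_r. apply log2_le.
    + assert (0 <= h ^ 2 / (1 + D)) by (apply Rdiv_le_0_compat; nra). nra.
    + apply Rplus_le_compat_l, Rmult_le_compat_l. lra.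
      unfold Rdiv. apply Rmult_le_compat_l. nra.
      apply Rinv_le_contravar; lra.
  - eapply Rle_trans. apply fold_le_mem, HNin. rewrite Heq. unfold Rcut.
    rewrite Nat.sub_diag. simpl INR at 1 4. rewrite !Rmult_0_l.
    apply Rplus_le_compat_l, Ropp_le_contravar, Rmult_le_compat_l. lra.
    apply log2_le. apply Rdiv_lt_0_compat; lra.
    replace ((1 + Dstar) / Dstar) with (/ Dstar + 1) by (field; lra).
    replace ((1 + D) / D) with (/ D + 1) by (field; lra).
    apply Rplus_le_compat_r, Rinv_le_contravar; lra.
Qed.
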